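(* Let $\mathcal{C}$ be a concept class over $\{\pm1\}^n$, $\mathcal{D}$ a class of distributions closed under restrictions, and $D^\star$ a distribution that has a depth-$d$, size-$s$ subcube partition $L^\star=(\rho_1,\dots,\rho_s)$ into $\mathcal{D}$ (ordered arbitrarily). Let $A$ be a base learner that learns $\mathcal{C}$ over distributions in $\mathcal{D}$ to expected error $\le\frac{\varepsilon}{\log(1/\varepsilon)}$ with sample complexity $m$. Let \[ m_{\mathrm{train}}\ge s\cdot\frac{\log(1/\varepsilon)}{\varepsilon}\cdot\max(2m,8), \] let $f\in\mathcal{C}$, let $S_{\mathrm{train}}$ consist of $m_{\mathrm{train}}$ i.i.d. examples from $D^\star_f$, and let $\mathcal{H}$ be the random mapping $\rho\mapsto A((S_{\mathrm{train}})_\rho)$ over all restrictions $\rho$ of depth $\le d$ (randomness from $S_{\mathrm{train}}$ and $A$). Then \[ \mathbb{E}_{\mathcal{H}}\left[\mathrm{error}(L^\star\circ\mathcal{H},D^\star_f)\right]\le\frac{2\varepsilon}{\log(1/\varepsilon)}. \]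
   Context: A restriction is $\rho\in\{\pm1,\star\}^n$; $x\in\rho$ means $x_i=\rho_i$ or $\rho_i=\star$ for all $i$; depth of $\rho$ = number of non-$\star$ coordinates. $D_\rho$ is $D$ conditioned on $x\in\rho$; for labeled $S$, $S_\rho=\{(x,y)\in S:x\in\rho\}$. $\mathcal{D}$ is closed under restrictions if $D\in\mathcal{D}\Rightarrow D_\rho\in\mathcal{D}$ for all $\rho$. $D_f$ is the distribution of $(x,f(x))$, $x\sim D$; $\mathrm{error}(h,P)=\Pr_{(x,y)\sim P}[h(x)\neq y]$ ($\bot$ counts as an error). $A$ learns $\mathcal{C}$ to expected error $\varepsilon'$ over $D$ with $m$ samples if for every $f\in\mathcal{C}$, given (at least) $m$ i.i.d. samples from $D_f$, its output $h$ has $\mathbb{E}[\mathrm{error}(h,D_f)]\le\varepsilon'$. $D^\star$ has a depth-$d$, size-$s$ subcube partition into $\mathcal{D}$ if there are $s$ pairwise disjoint restrictions $\rho_1,\dots,\rho_s$, each of depth $\le d$, such that every $x$ in the support of $D^\star$ lies in some $\rho_i$ and $(D^\star)_{\rho_i}\in\mathcal{D}$ for all $i$. For an ordered list $L$ of restrictions, $L\circ\mathcal{H}(x)=\mathcal{H}(\rho)(x)$ for the first $\rho\in L$ containing $x$, and $\bot$ if none does. *)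

(* Defs.v *)
From HB Require Import structures.
From mathcomp Require Import all_boot all_order all_algebra.
From mathcomp Require Import all_classical all_reals.
From mathcomp Require Import exp.
Set Implicit Arguments. Unset Strict Implicit. Unset Printing Implicit Defensive.
Import Order.TTheory GRing.Theory Num.Theory.
Local Open Scope ring_scope.

(* Points of {+-1}^n, encoded as boolean vectors (true = +1, false = -1). *)
Definition X (n : nat) : finType := {ffun 'I_n -> bool}.
(* Restrictions rho in {+-1,*}^n: None = star, Some b = fixed value. *)
Definition Rst (n : nat) : finType := {ffun 'I_n -> option bool}.
(* Hypotheses: maps X -> {+-1} u {bot}; None = bot. *)
Definition Hyp (n : nat) : finType := {ffun X n -> option bool}.

Definition inrst n (x : X n) (rho : Rst n) : bool :=
  [forall i, if rho i is Some b then x i == b else true].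

Definition depth n (rho : Rst n) : nat := #|[set i | rho i != None]|.

Section Prob.
Variable R : realType.

Definition isDist (T : finType) (P : {ffun T -> R}) : Prop :=
  (forall t, 0 <= P t) /\ \sum_t P t = 1.

Definition mass n (D : {ffun X n -> R}) (rho : Rst n) : R :=
  \sum_(x | inrst x rho) D x.

(* D_rho : D conditioned on x \in rho (meaningful when mass D rho > 0) *)
Definition cond n (D : {ffun X n -> R}) (rho : Rst n) : {ffun X n -> R} :=
  [ffun x => if inrst x rho then D x / mass D rho else 0].

Definition closed_under_restr n (Dcls : {ffun X n -> R} -> Prop) : Prop :=
  forall D rho, Dcls D -> 0 < mass D rho -> Dcls (cond D rho).

(* error(h, D_f) = Pr_{x ~ D}[h x <> f x], bot counting as an error *)
Definition err n (h : X n -> option bool) (D : {ffun X n -> R}) (f : X n -> bool) : R :=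
  \sum_x D x * (h x != Some (f x))%:R.

Definition Esample n (D : {ffun X n -> R}) (k : nat) (F : k.-tuple (X n) -> R) : R :=
  \sum_(t : k.-tuple (X n)) (\prod_(x <- t) D x) * F t.
Arguments Esample : clear implicits.
Arguments Esample {n} D k F.

Definition labeled n (f : X n -> bool) (s : seq (X n)) : seq (X n * bool) :=
  [seq (x, f x) | x <- s].

Definition restr_sample n (S : seq (X n * bool)) (rho : Rst n) : seq (X n * bool) :=
  [seq p <- S | inrst p.1 rho].

(* A (randomized: output is a distribution over hypotheses) learns C to
   expected error eps' over every D in Dcls with m samples. *)
Definition learns n (C : (X n -> bool) -> Prop) (Dcls : {ffun X n -> R} -> Prop)
    (A : seq (X n * bool) -> {ffun Hyp n -> R}) (m : nat) (eps' : R) : Prop :=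
  forall D, Dcls D -> forall f, C f -> forall k, (m <= k)%N ->
    Esample D k (fun t => \sum_(h : Hyp n) A (labeled f t) h * err h D f) <= eps'.

Definition subcube_partition n (Dcls : {ffun X n -> R} -> Prop)
    (Dstar : {ffun X n -> R}) (d s : nat) (L : s.-tuple (Rst n)) : Prop :=
  [/\ (forall i j : 'I_s, i != j -> forall x, ~~ (inrst x (tnth L i) && inrst x (tnth L j))),
      (forall i, (depth (tnth L i) <= d)%N),
      (forall x, 0 < Dstar x -> exists i, inrst x (tnth L i)) &
      (forall i, 0 < mass Dstar (tnth L i) -> Dcls (cond Dstar (tnth L i)))].

Definition compL n (L : seq (Rst n)) (H : Rst n -> Hyp n) (x : X n) : option bool :=
  if [seq rho <- L | inrst x rho] is rho :: _ then H rho x else None.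

(* E_H[error(L o H, Dstar_f)], where S_train ~ (Dstar_f)^mtrain and
   H rho = A((S_train)_rho), with independent runs of A for distinct rho. *)
Definition expected_error n (A : seq (X n * bool) -> {ffun Hyp n -> R})
    (Dstar : {ffun X n -> R}) (f : X n -> bool) (L : seq (Rst n)) (mtrain : nat) : R :=
  Esample Dstar mtrain (fun t =>
    let S := labeled f t in
    \sum_(H : {ffun Rst n -> Hyp n})
       (\prod_(rho : Rst n) A (restr_sample S rho) (H rho)) * err (compL L H) Dstar f).

End Prob.

(* Main.v *)
Require Import Defs.
From HB Require Import structures.
From mathcomp Require Import all_boot all_order all_algebra.
From mathcomp Require Import all_classical all_reals.
From mathcomp Require Import exp lra ring.
Import Order.TTheory GRing.Theory Num.Theory.
Local Open Scope ring_scope.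
Set Implicit Arguments. Unset Strict Implicit. Unset Printing Implicit Defensive.

Section Aux.
Variable R : realType.
Variable n : nat.
Implicit Types D : {ffun X n -> R}.

Fixpoint Eseq D (k : nat) (G : seq (X n) -> R) : R :=
  match k with
  | 0 => G [::]
  | k'.+1 => \sum_x D x * Eseq D k' (fun u => G (x :: u))
  end.

Lemma sum_tupleS (T : finType) k (F : k.+1.-tuple T -> R) :
  \sum_(t : k.+1.-tuple T) F t = \sum_(x : T) \sum_(t : k.-tuple T) F (cons_tuple x t).
Proof.
rewrite pair_big /=.
rewrite (reindex (fun p : T * k.-tuple T => cons_tuple p.1 p.2)) //=.
exists (fun t : k.+1.-tuple T => (thead t, behead_tuple t)).
  by move=> [x t] _ /=; congr pair; apply: val_inj.
by move=> t _; rewrite [RHS]tuple_eta; apply: val_inj.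
Qed.

Lemma Esample_Eseq D k (G : seq (X n) -> R) :
  @Esample R n D k (fun t => G (tval t)) = Eseq D k G.
Proof.
elim: k G => [|k IH] G.
  rewrite /Esample /= (big_pred1 [tuple]) /=; last first.
    by move=> t; symmetry; apply/eqP; apply: val_inj; case: t => -[].
  by rewrite big_nil mul1r.
rewrite /Esample sum_tupleS /=; apply: eq_bigr => x _.
rewrite -IH /Esample mulr_sumr; apply: eq_bigr => t _.
by rewrite big_cons mulrA.
Qed.

Lemma Eseq_le D k (G1 G2 : seq (X n) -> R) :
  (forall x, 0 <= D x) -> (forall u, G1 u <= G2 u) -> Eseq D k G1 <= Eseq D k G2.
Proof.
move=> D0; elim: k G1 G2 => [|k IH] G1 G2 H //=.
apply: ler_sum => x _; apply: ler_wpM2l => //; exact: IH.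
Qed.

Lemma Eseq_sum D k (I : finType) (G : I -> seq (X n) -> R) :
  Eseq D k (fun u => \sum_i G i u) = \sum_i Eseq D k (G i).
Proof.
elim: k G => [|k IH] G //=.
under eq_bigr => x _ do rewrite IH mulr_sumr.
by rewrite exchange_big.
Qed.

Lemma Eseq_scale D k c (G : seq (X n) -> R) :
  Eseq D k (fun u => c * G u) = c * Eseq D k G.
Proof.
elim: k G => [|k IH] G //=.
rewrite mulr_sumr; apply: eq_bigr => x _; rewrite IH; ring.
Qed.

Lemma Eseq_const D k c : \sum_x D x = 1 -> Eseq D k (fun _ => c) = c.
Proof.
move=> D1; elim: k => [|k IH] //=.
by under eq_bigr => x _ do rewrite IH; rewrite -mulr_suml D1 mul1r.
Qed.

End Aux.
Section Bw.
Variable R : realType.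
Variables p q : R.

Fixpoint bw (N k : nat) : R :=
  match N with
  | 0 => (k == 0)%:R
  | N'.+1 => p * (if k is k'.+1 then bw N' k' else 0) + q * bw N' k
  end.

Definition Mw N (g : nat -> R) := \sum_(k < N.+1) bw N k * g k.

Lemma bw_big N k : (N < k)%N -> bw N k = 0.
Proof.
elim: N k => [|N IH] [|k] //= H.
  by rewrite IH // IH ?mulr0 ?addr0 //; apply: ltnW.
Qed.

Lemma bw_ge0 N k : 0 <= p -> 0 <= q -> 0 <= bw N k.
Proof.
move=> p0 q0; elim: N k => [|N IH] k /=; first by case: (k == 0%N).
apply: addr_ge0; apply: mulr_ge0 => //; by case: k.
Qed.

Lemma Mw_rec N g : Mw N.+1 g = p * Mw N (fun k => g k.+1) + q * Mw N g.
Proof.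
rewrite /Mw.
under eq_bigr => k _ do rewrite /= mulrDl.
rewrite big_split /=; congr (_ + _).
  rewrite big_ord_recl /= mulr0 mul0r add0r mulr_sumr.
  by apply: eq_bigr => i _; rewrite mulrA add0n /bump /= add1n.
rewrite big_ord_recr /= bw_big // mulr0 mul0r addr0 mulr_sumr.
by apply: eq_bigr => i _; rewrite mulrA.
Qed.

Lemma Mw_le N g1 g2 : 0 <= p -> 0 <= q -> (forall k, g1 k <= g2 k) -> Mw N g1 <= Mw N g2.
Proof.
move=> p0 q0 H; apply: ler_sum => k _; apply: ler_wpM2l; [exact: bw_ge0|exact: H].
Qed.

Lemma Mw_lin N (a b : R) g : Mw N (fun k => a + b * g k) = a * Mw N (fun _ => 1) + b * Mw N g.
Proof.
rewrite /Mw !mulr_sumr -big_split /=; apply: eq_bigr => k _ /=; ring.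
Qed.

Lemma Mw_scale N (b : R) g : Mw N (fun k => b * g k) = b * Mw N g.
Proof. by rewrite /Mw mulr_sumr; apply: eq_bigr => k _; ring. Qed.

Hypothesis pq : p + q = 1.

Lemma Mw1 N : Mw N (fun _ => 1) = 1.
Proof.
elim: N => [|N IH]; first by rewrite /Mw big_ord_recl big_ord0 /= mulr1 addr0.
by rewrite Mw_rec IH !mulr1.
Qed.

Lemma Mw2 N c : Mw N (fun k => (k%:R - c) ^+ 2) = (N%:R * p - c) ^+ 2 + N%:R * p * q.
Proof.
elim: N c => [|N IH] c.
  by rewrite /Mw big_ord_recl big_ord0 /=; ring.
rewrite Mw_rec.
have -> : Mw N (fun k => (k.+1%:R - c) ^+ 2) = Mw N (fun k => (k%:R - (c - 1)) ^+ 2).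
  by apply: eq_bigr => k _; rewrite -natr1; congr (_ * _); ring.
rewrite !IH -natr1.
have -> : q = 1 - p by rewrite -pq; ring.
ring.
Qed.

End Bw.

Section Claim.
Variable R : realType.
Variable n : nat.
Variable D : {ffun X n -> R}.
Variable rho : Rst n.
Hypothesis p0 : mass D rho != 0.

Let p := mass D rho.
Let q := \sum_(x | ~~ inrst x rho) D x.

Lemma claim N G :
  Eseq D N (fun u => G [seq x <- u | inrst x rho]) =
  Mw p q N (fun k => Eseq (cond D rho) k G).
Proof.
elim: N G => [|N IH] G.
  by rewrite /Mw big_ord_recl big_ord0 /= mul1r addr0.
rewrite Mw_rec /=.
transitivity (\sum_x (if inrst x rho then D x * Mw p q N (fun k => Eseq (cond D rho) k (fun u => G (x :: u)))
                      else D x * Mw p q N (fun k => Eseq (cond D rho) k G))).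
  apply: eq_bigr => x _; case: (inrst x rho).
    by rewrite (IH (fun u => G (x :: u))).
  by rewrite IH.
rewrite (bigID (fun x => inrst x rho)) /=; congr (_ + _); last first.
  rewrite mulr_suml; apply: eq_bigr => x /negbTE -> //.
rewrite -Mw_scale /Mw.
under eq_bigr => x Hx do rewrite Hx mulr_sumr.
rewrite exchange_big /=; apply: eq_bigr => k _.
rewrite !mulr_sumr [RHS](bigID (fun x => inrst x rho)) /=.
rewrite [X in _ = _ + X]big1 ?addr0; last first.
  by move=> x /negbTE Hx; rewrite ffunE Hx !mul0r !mulr0.
apply: eq_bigr => x Hx; rewrite ffunE Hx -/p.
by field.
Qed.

End Claim.

Section Piece.
Variable R : realType.
Variable n : nat.
Variable D : {ffun X n -> R}.
Variable rho : Rst n.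

Lemma mass_ge0 : (forall x, 0 <= D x) -> 0 <= mass D rho.
Proof. by move=> D0; apply: sumr_ge0. Qed.

Lemma piece_bound N m (eps' s' K : R) (Phi : seq (X n) -> R) :
  isDist D -> 0 < eps' -> 0 < s' ->
  (forall u, Phi u <= mass D rho) ->
  (0 < mass D rho -> isDist (cond D rho) /\
     forall k, (m <= k)%N -> Eseq (cond D rho) k Phi <= mass D rho * eps') ->
  s' * K <= N%:R * eps' -> 2 * m%:R <= K -> 8 <= K ->
  Eseq D N (fun u => Phi [seq x <- u | inrst x rho]) <= mass D rho * eps' + eps' / s'.
Proof.
move=> [D0 D1] e0 s0 Phile Hpos HN HKm HK8.
have p0 := mass_ge0 D0.
have es0 : 0 <= eps' / s' by apply: divr_ge0; apply: ltW.
have [pgt0|] := ltrP 0 (mass D rho); last first.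
  move=> ple0; have pe0 : mass D rho = 0 by apply/eqP; rewrite eq_le ple0 p0.
  apply: (le_trans (Eseq_le _ D0 (G2 := fun _ => 0) _)).
    by move=> u; rewrite -pe0.
  by rewrite Eseq_const // pe0 mul0r add0r.
have [[D'0 D'1] Hlearn] := Hpos pgt0.
set p := mass D rho in pgt0 p0 Phile Hlearn *.
set q := \sum_(x | ~~ inrst x rho) D x.
have pq : p + q = 1 by rewrite -D1 [RHS](bigID (fun x => inrst x rho)).
have q0 : 0 <= q by apply: sumr_ge0.
rewrite claim; last by rewrite gt_eqF.
rewrite -/p -/q.
apply: (le_trans (Mw_le N _ _ (g2 := fun k => p * eps' + p * (k < m)%:R) _)) => //.
  move=> k; case: ltnP => km.
    apply: (le_trans (Eseq_le _ D'0 (G2 := fun _ => p) Phile)).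
    rewrite Eseq_const // mulr1 lerDr; apply: mulr_ge0 => //; exact: ltW.
  by rewrite mulr0 addr0; apply: Hlearn.
rewrite Mw_lin Mw1 // mulr1 lerD2l.
set B := Mw p q N (fun k => (k < m)%:R).
have B1 : B <= 1.
  rewrite -(Mw1 pq N); apply: Mw_le => // k; by case: (k < m)%N.
have B0 : 0 <= B.
  rewrite /B /Mw; apply: sumr_ge0 => k _; apply: mulr_ge0; first exact: bw_ge0.
  by case: (k < m)%N.
have [ple|plt] := lerP p (eps' / s').
  apply: le_trans ple; rewrite -[leRHS]mulr1; apply: ler_wpM2l => //.
set c := N%:R * p.
have N0 : 0 <= N%:R :> R by [].
have ps : eps' < p * s' by rewrite -ltr_pdivrMr.
have cK : K <= c.
  apply: (le_trans (y := N%:R * eps' / s')).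
    by rewrite ler_pdivlMr // mulrC.
  rewrite ler_pdivrMr // /c -mulrA; apply: ler_wpM2l => //; exact: ltW.
have cm : 0 < c - m%:R by lra.
have Bc : B <= ((c - m%:R) ^+ 2)^-1 * (c * q).
  apply: (le_trans (Mw_le N p0 q0 (g2 := fun k => ((c - m%:R) ^+ 2)^-1 * (k%:R - c) ^+ 2) _)).
    move=> k; case: ltnP => km; last first.
      by apply: mulr_ge0; rewrite ?invr_ge0 sqr_ge0.
    rewrite ler_pdivlMl ?exprn_gt0 // mulr1.
    have : k.+1%:R <= m%:R :> R by rewrite ler_nat.
    rewrite -natr1 => km'.
    have k0 : 0 <= k%:R :> R by [].
    nra.
  rewrite Mw_scale Mw2 // /c subrr expr0n /= add0r; lra.
have Bc2 : B * (c - m%:R) ^+ 2 <= c.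
  rewrite -ler_pdivlMr ?exprn_gt0 // mulrC.
  apply: (le_trans Bc); apply: ler_wpM2l; first by rewrite invr_ge0 sqr_ge0.
  have : 0 <= c by lra.
  have : q <= 1 by lra.
  nra.
have Bc3 : B * c <= 4.
  have cpos : 0 < c by lra.
  have : c ^+ 2 <= 4 * (c - m%:R) ^+ 2 by nra.
  nra.
have Npos : 0 < N%:R :> R.
  have : 0 < s' * K by apply: mulr_gt0 => //; lra.
  move=> h; rewrite lt0r N0 andbT; apply/eqP => h0.
  by move: HN; rewrite h0 mul0r; lra.
rewrite ler_pdivlMr //.
rewrite -(ler_pM2l Npos).
have : s' * 8 <= N%:R * eps' by nra.
rewrite /c in Bc3.
nra.
Qed.
End Piece.

Section Main.
Variable R : realType.
Variable n : nat.

Lemma Eseq_ext (D : {ffun X n -> R}) k (G1 G2 : seq (X n) -> R) :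
  (forall u, G1 u = G2 u) -> Eseq D k G1 = Eseq D k G2.
Proof.
elim: k G1 G2 => [|k IH] G1 G2 H /=; first exact: H.
by apply: eq_bigr => x _; congr (_ * _); apply: IH.
Qed.

Lemma prod_marg (I J : finType) (a : I -> J -> R) (g : J -> R) (i0 : I) :
  (forall i, \sum_j a i j = 1) ->
  \sum_(H : {ffun I -> J}) (\prod_i a i (H i)) * g (H i0) = \sum_j a i0 j * g j.
Proof.
move=> Ha.
pose F := fun i j => if i == i0 then a i j * g j else a i j.
have E1 : forall H : {ffun I -> J}, (\prod_i a i (H i)) * g (H i0) = \prod_i F i (H i).
  move=> H; rewrite (bigD1 i0) //= [RHS](bigD1 i0) //= /F eqxx.
  rewrite [X in _ = _ * X](eq_bigr (fun i => a i (H i))) => [|i /negbTE ->] //.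
  by rewrite mulrAC.
under eq_bigr do rewrite E1.
rewrite -(bigA_distr_bigA) (bigD1 i0) //= [X in _ * X]big1 ?mulr1.
  by apply: eq_bigr => j _; rewrite /F eqxx.
move=> i /negbTE Hi; rewrite -(Ha i); apply: eq_bigr => j _.
by rewrite /F Hi.
Qed.

Lemma err_le s (L : s.-tuple (Rst n)) (D : {ffun X n -> R}) (f : X n -> bool)
    (H : {ffun Rst n -> Hyp n}) :
  (forall x, 0 <= D x) -> (forall x, 0 < D x -> exists i, inrst x (tnth L i)) ->
  err (compL L H) D f <=
  \sum_(i < s) \sum_x D x * ((inrst x (tnth L i))%:R * (H (tnth L i) x != Some (f x))%:R).
Proof.
move=> D0 Dcov; rewrite /err [leRHS]exchange_big /=; apply: ler_sum => x _; rewrite -mulr_sumr.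
have [Dpos|Dle] := ltrP 0 (D x); last first.
  have -> : D x = 0 by apply/eqP; rewrite eq_le Dle D0.
  by rewrite !mul0r.
apply: ler_wpM2l => //.
have [i Hi] := Dcov x Dpos.
rewrite /compL.
case E: [seq rho <- L | inrst x rho] => [|r0 rs].
  have : tnth L i \in [seq rho <- L | inrst x rho] by rewrite mem_filter Hi mem_tnth.
  by rewrite E in_nil.
have : r0 \in [seq rho <- L | inrst x rho] by rewrite E mem_head.
rewrite mem_filter => /andP [Hin HL].
case/tnthP: HL => j Ej; subst r0.
rewrite (bigD1 j) //= Hin mul1r lerDl.
by apply: sumr_ge0 => k _; apply: mulr_ge0.
Qed.

Lemma sum_mass_le1 s (L : s.-tuple (Rst n)) (D : {ffun X n -> R}) :
  (forall x, 0 <= D x) -> \sum_x D x = 1 ->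
  (forall i j : 'I_s, i != j -> forall x, ~~ (inrst x (tnth L i) && inrst x (tnth L j))) ->
  \sum_(i < s) mass D (tnth L i) <= 1.
Proof.
move=> D0 D1 Hdis.
have -> : \sum_(i < s) mass D (tnth L i) = \sum_x D x * \sum_(i < s) (inrst x (tnth L i))%:R.
  rewrite [RHS](eq_bigr (fun x => \sum_(i < s) D x * (inrst x (tnth L i))%:R)); last first.
    by move=> x _; rewrite mulr_sumr.
  rewrite [RHS]exchange_big /=; apply: eq_bigr => i _.
  rewrite /mass big_mkcond /=; apply: eq_bigr => x _.
  by case: (inrst x (tnth L i)); rewrite ?mulr1 ?mulr0.
rewrite -[leRHS]D1; apply: ler_sum => x _.
rewrite -[leRHS]mulr1; apply: ler_wpM2l => //.
have [i Hi|none] := pickP (fun i => inrst x (tnth L i)).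
  rewrite (bigD1 i) //= Hi [X in _ + X]big1 ?addr0 //.
  move=> j Hj; have := Hdis i j; rewrite eq_sym Hj => /(_ isT x).
  by rewrite Hi /= => /negbTE ->.
by rewrite big1 // => i _; rewrite none.
Qed.


End Main.

Unset Implicit Arguments.
Set Strict Implicit.

Theorem corollary7p4 (R : realType) (n d s m mtrain : nat) (eps : R)
    (C : (X n -> bool) -> Prop) (Dcls : {ffun X n -> R} -> Prop)
    (Dstar : {ffun X n -> R}) (L : s.-tuple (Rst n))
    (A : seq (X n * bool) -> {ffun Hyp n -> R}) (f : X n -> bool) :
  0 < eps < 1 ->
  (forall D, Dcls D -> isDist D) ->
  closed_under_restr Dcls ->
  isDist Dstar ->
  subcube_partition Dcls Dstar d L ->
  (forall S, isDist (A S)) ->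
  learns C Dcls A m (eps / ln eps^-1) ->
  s%:R * (ln eps^-1 / eps) * Num.max (2 * m%:R) 8 <= mtrain%:R ->
  C f ->
  expected_error A Dstar f L mtrain <= 2 * eps / ln eps^-1.
Proof.
move=> /andP[e0 e1] HDcls _ [D0 D1] [Hdis Hdep Hcov Hcls] HA Hlearn HN Cf.
have ln0 : 0 < ln eps^-1 by apply: ln_gt0; rewrite invf_gt1.
set eps' := eps / ln eps^-1.
have e'0 : 0 < eps' by apply: divr_gt0.
set K := (Num.max (2 * m%:R) 8 : R).
have HNK : s%:R * K <= mtrain%:R * eps'.
  have <- : s%:R * (ln eps^-1 / eps) * K * eps' = s%:R * K.
    rewrite /eps'; field; rewrite ?gt_eqF //.
  by apply: ler_wpM2r => //; apply: ltW.
rewrite -mulrA -/eps'.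
pose g (i : 'I_s) (h : Hyp n) := \sum_x Dstar x * ((inrst x (tnth L i))%:R * (h x != Some (f x))%:R).
pose Phi i (u : seq (X n)) := \sum_h A (labeled f u) h * g i h.
have -> : expected_error A Dstar f L mtrain = Eseq Dstar mtrain (fun u =>
    \sum_(H : {ffun Rst n -> Hyp n})
       (\prod_(rho : Rst n) A (restr_sample (labeled f u) rho) (H rho)) * err (compL L H) Dstar f).
  exact: (Esample_Eseq Dstar mtrain (fun u =>
    \sum_(H : {ffun Rst n -> Hyp n})
       (\prod_(rho : Rst n) A (restr_sample (labeled f u) rho) (H rho)) * err (compL L H) Dstar f)).
apply: (le_trans (Eseq_le _ D0 (G2 := fun u => \sum_(i < s) Phi i [seq x <- u | inrst x (tnth L i)]) _)).
  move=> u.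
  apply: (le_trans (y := \sum_(H : {ffun Rst n -> Hyp n})
       (\prod_(rho : Rst n) A (restr_sample (labeled f u) rho) (H rho)) * \sum_(i < s) g i (H (tnth L i)))).
    apply: ler_sum => H _; apply: ler_wpM2l.
      by apply: prodr_ge0 => rho _; case: (HA (restr_sample (labeled f u) rho)).
    exact: err_le.
  under eq_bigr do rewrite mulr_sumr.
  rewrite exchange_big /= le_eqVlt; apply/orP; left; apply/eqP; apply: eq_bigr => i _.
  rewrite (@prod_marg R _ _ (fun rho h => A (restr_sample (labeled f u) rho) h) (g i) (tnth L i)); last first.
    by move=> rho; case: (HA (restr_sample (labeled f u) rho)).
  apply: eq_bigr => h _; congr (A _ h * _).
  by rewrite /restr_sample /labeled filter_map.
rewrite Eseq_sum.
have gle : forall i h, g i h <= mass Dstar (tnth L i).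
  move=> i h; rewrite /mass big_mkcond /=; apply: ler_sum => x _.
  case: (inrst x _); case: (h x != _); rewrite /= ?mulr1n ?mulr0n ?mulr1 ?mulr0 ?mul0r //.
apply: (le_trans (y := \sum_(i < s) (mass Dstar (tnth L i) * eps' + eps' / s%:R))).
  apply: ler_sum => i _.
  have s0 : 0 < s%:R :> R by rewrite ltr0n; apply: leq_ltn_trans (ltn_ord i).
  apply: (@piece_bound R n Dstar (tnth L i) mtrain m eps' s%:R K (Phi i)) => //.
  - move=> u; rewrite /Phi.
    apply: (le_trans (y := \sum_h A (labeled f u) h * mass Dstar (tnth L i))).
      apply: ler_sum => h _; apply: ler_wpM2l => //; by case: (HA (labeled f u)).
    by rewrite -mulr_suml; case: (HA (labeled f u)) => _ ->; rewrite mul1r.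
  - move=> mp; have Dc := Hcls i mp; have Di := HDcls _ Dc; split => // k km.
    have Hl := Hlearn _ Dc f Cf k km.
    rewrite (Eseq_ext _ _ (G2 := fun u => mass Dstar (tnth L i) *
        \sum_h A (labeled f u) h * err h (cond Dstar (tnth L i)) f)); last first.
      move=> u; rewrite /Phi mulr_sumr; apply: eq_bigr => h _.
      rewrite mulrCA; congr (_ * _).
      rewrite /g /err mulr_sumr; apply: eq_bigr => x _; rewrite ffunE.
      case: (inrst x _); rewrite /= ?mul0r ?mulr0 ?mul1r //.
      by field; rewrite gt_eqF.
    rewrite Eseq_scale; apply: ler_wpM2l; first exact: ltW.
    by rewrite -Esample_Eseq.
  - by rewrite /K le_max lexx.
  - by rewrite /K le_max lexx orbT.
rewrite big_split /= -mulr_suml sumr_const card_ord.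
have Hm := sum_mass_le1 D0 D1 Hdis.
have H1 : (\sum_(i < s) mass Dstar (tnth L i)) * eps' <= eps'.
  by rewrite -[leRHS]mul1r; apply: ler_wpM2r => //; apply: ltW.
have H2 : (eps' / s%:R) *+ s <= eps'.
  case: (eqVneq s 0%N) => [->|sn0]; first by rewrite mulr0n; apply: ltW.
  rewrite -mulr_natl mulrCA divff ?mulr1 // pnatr_eq0 //.
lra.
Qed.
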